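(* Let $\widetilde{\mathsf T}(z)$ be the operator defined in the context, written in the normal form $\widetilde{\mathsf T}(z)=\sum_\alpha f_\alpha(z)\mathsf D^{(\alpha)}$. Then for every $k\in\{1,\dots,d\}$ and every smooth function $F$ of $(k_1,\dots,k_{n-1})$, setting $G(\bm y,\rho)=F(\bm k(\bm y,\rho))$, one has $$\sum_\alpha f_\alpha(y_k)\,(\mathsf D^{(\alpha)}F)(\bm k(\bm y,\rho))=-\frac{\partial^2}{\partial y_k^2}G(\bm y,\rho),$$ at all points with $\rho\ne0$, $y_k\notin\{z_1,\dots,z_{n-1}\}$; i.e. $\widetilde{\mathsf T}(y_k)=-\partial_{y_k}^2$.
   Context: $n\ge4$, $d=n-3$, $z_1,\dots,z_{n-1}\in\mathbb C$ distinct, $j_1,\dots,j_{n-1}\in\mathbb C$, $\delta_r=j_r(j_r+1)$. Change of variables: $k_r(\bm y,\rho)=\rho\,\kappa_r(\bm y)$, $\kappa_r(\bm y)=\frac{\prod_{k=1}^{d}(z_r-y_k)}{\prod_{s\ne r}(z_r-z_s)}$, $r=1,\dots,n-1$, with $\bm y=(y_1,\dots,y_d)$, $\rho\in\mathbb C^*$. Define operators in the variables $k_1,\dots,k_{n-1}$ depending on $z\in\mathbb C\setminus\{z_r\}$: $\mathsf c(z)=\sum_{r=1}^{n-1}\frac{k_r}{z-z_r}$, $\mathsf a(z)=-\sum_{r=1}^{n-1}\frac{k_r}{z-z_r}\partial_{k_r}$, $\mathsf b(z)=\sum_{r=1}^{n-1}\frac{1}{z-z_r}\big(\frac{\delta_r}{k_r}-k_r\partial_{k_r}^2\big)$,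 $\mathsf a'(z)=\sum_{r}\frac{k_r}{(z-z_r)^2}\partial_{k_r}$, and $\widetilde{\mathsf T}(z)=-\mathsf a(z)^2+\mathsf a'(z)-\mathsf c(z)\mathsf b(z)$. Expanding, $\widetilde{\mathsf T}(z)=\sum_\alpha f_\alpha(z)\mathsf D^{(\alpha)}$ with rational functions $f_\alpha$ of $z$ placed to the left of $z$-independent differential operators $\mathsf D^{(\alpha)}$ in $\bm k$ (e.g. $\mathsf a(z)^2=\sum_{r,s}\frac{1}{(z-z_r)(z-z_s)}k_r\partial_{k_r}k_s\partial_{k_s}$); ''$\widetilde{\mathsf T}(y_k)$'' means substituting $z=y_k$ in the $f_\alpha$ and pulling back via the change of variables. (In the paper, $\widetilde{\mathsf T}(z)$ represents the conjugate of the operator $\mathsf T(z)=\sum_{r=1}^{n-1}\big(\frac{\delta_r}{(z-z_r)^2}+\frac{\mathsf H_r}{z-z_r}\big)$, built from the Gaudin Hamiltonians $\mathsf H_r$, by the twisted Fourier transform.) *)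

(* Defs.v *)
From HB Require Import structures.
From mathcomp Require Import all_boot all_order all_algebra.
From mathcomp Require Import all_classical all_reals all_analysis.
From mathcomp Require Import complex.
Set Implicit Arguments. Unset Strict Implicit. Unset Printing Implicit Defensive.
Import Order.TTheory GRing.Theory Num.Theory.
Import numFieldNormedType.Exports.
Local Open Scope ring_scope.

Section Gaudin.
Variable R : realType.
Local Notation C := R[i].
Local Notation Co := (R[i])^o.

Definition pd (m : nat) (F : 'rV[C]_m -> Co) (r : 'I_m) : 'rV[C]_m -> Co :=
  fun x => derive F x (delta_mx 0 r).

Definition kappa (n : nat) (z : 'I_(n - 1) -> C) (y : 'rV[C]_(n - 3))
  (r : 'I_(n - 1)) : C :=
  (\prod_(l < n - 3) (z r - y 0 l)) / (\prod_(s < n - 1 | s != r) (z r - z s)).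

Definition kvec (n : nat) (z : 'I_(n - 1) -> C) (y : 'rV[C]_(n - 3)) (rho : C)
  : 'rV[C]_(n - 1) := \row_r (rho * kappa z y r).

Variable m : nat.
Implicit Types (z : 'I_m -> C) (delta : 'I_m -> C) (w : C) (G : 'rV[C]_m -> Co).

Definition op_c z w G : 'rV[C]_m -> Co :=
  fun k => \sum_(r < m) (k 0 r / (w - z r)) * G k.

Definition op_a z w G : 'rV[C]_m -> Co :=
  fun k => - \sum_(r < m) (k 0 r / (w - z r)) * pd G r k.

Definition op_b z delta w G : 'rV[C]_m -> Co :=
  fun k => \sum_(r < m) (1 / (w - z r)) *
             (delta r / k 0 r * G k - k 0 r * pd (pd G r) r k).

Definition op_a' z w G : 'rV[C]_m -> Co :=
  fun k => \sum_(r < m) (k 0 r / (w - z r) ^+ 2) * pd G r k.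

Definition Ttilde z delta w G : 'rV[C]_m -> Co :=
  fun k => - op_a z w (op_a z w G) k + op_a' z w G k
           - op_c z w (op_b z delta w G) k.

End Gaudin.

Notation CV R m := ('rV[R[i]]_m : normedModType R[i]).

(* Main.v *)
Require Import Defs.
From HB Require Import structures.
From mathcomp Require Import all_boot all_order all_algebra.
From mathcomp Require Import all_classical all_reals all_analysis.
From mathcomp Require Import complex.
From mathcomp Require Import zify ring.
Import Order.TTheory GRing.Theory Num.Theory.
Import numFieldNormedType.Exports.
Local Open Scope ring_scope.
Local Open Scope classical_set_scope.

Section H.
Context {K : numFieldType} {V W : normedModType K}.

Lemma derive_near (f g : V -> W) x v : derivable g x v ->
  (\forall h \near (0:K), f (h *: v + x) = g (h *: v + x)) ->
  derive f x v = derive g x v.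
Proof.
move=> dg H.
have fx : f x = g x.
  by have := nbhs_singleton H; rewrite /= scale0r add0r.
rewrite /derive; apply: cvg_lim; first exact: norm_hausdorff.
apply: cvg_trans; last exact: dg.
apply: near_eq_cvg.
apply: (nbhs_dnbhs (x := (0:K))).
by apply: filterS H => h /= ->; rewrite fx.
Qed.

Lemma derive_affine (f : V -> W) x v a :
  (forall h, f (h *: v + x) - f x = h *: a) ->
  derivable f x v /\ derive f x v = a.
Proof.
move=> H.
have N : \forall h \near (0:K)^', h^-1 *: ((f \o shift x) (h *: v) - f x) = a.
  near=> h; have hn : h != 0 by near: h; exact: nbhs_dnbhs_neq.
  by rewrite /= H scalerA mulVf // scale1r.
split; [exact: is_cvg_near_cst N | exact: lim_near_cst N].
Unshelve. all: by end_near.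
Qed.

Lemma derive_transfer (V2 : normedModType K) (f1 : V -> W) (f2 : V2 -> W) x1 x2 v1 v2 :
  (forall h : K, f1 (h *: v1 + x1) = f2 (h *: v2 + x2)) ->
  derive f1 x1 v1 = derive f2 x2 v2.
Proof.
move=> E.
have E0 : f1 x1 = f2 x2 by have := E 0; rewrite !scale0r !add0r.
rewrite /derive. f_equal. f_equal. apply/funext => h /=.
by rewrite E E0.
Qed.

End H.

Section H2.
Context {K : numFieldType} {V : normedModType K}.

Lemma derive_sumZ n (a : 'I_n -> K) (f : 'I_n -> V -> K^o) x v :
  (forall i, derivable (f i) x v) ->
  derivable (fun y => \sum_i a i * f i y) x v /\
  derive (fun y => \sum_i a i * f i y) x v = \sum_i a i * derive (f i) x v.
Proof.
move=> df.
have -> : (fun y => \sum_i a i * f i y) = \sum_i (a i \*: f i).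
  by rewrite fct_sumE.
have di : forall i, derivable (a i \*: f i) x v by move=> i; exact: derivableZ.
split; first exact: derivable_sum.
rewrite derive_sum //; apply: eq_bigr => i _; exact: deriveZ.
Qed.

Lemma derive_rowlin m (F : 'rV[K]_m -> K^o) x (u : 'rV[K]_m) :
  differentiable F x ->
  derive F x u = \sum_r u 0 r * derive F x (delta_mx 0 r).
Proof.
move=> dF; rewrite deriveE // {1}(row_sum_delta u) linear_sum.
apply: eq_bigr => r _; rewrite linearZ deriveE //.
Qed.

End H2.

Lemma lagr (K : fieldType) m (z : 'I_m -> K) (hz : injective z) (p : {poly K}) :
  (size p < m)%N ->
  \sum_(r < m) p.[z r] / \prod_(s < m | s != r) (z r - z s) = 0.
Proof.
move=> sp.
have m0 : (0 < m)%N := leq_ltn_trans (leq0n _) sp.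
pose L r := \prod_(s < m | s != r) ('X - (z s)%:P).
pose D r := \prod_(s < m | s != r) (z r - z s).
have DL r : (L r).[z r] = D r.
  by rewrite /L horner_prod; apply: eq_bigr => s _; rewrite hornerXsubC.
have D0 r : D r != 0.
  by apply/prodf_neq0 => s sr; rewrite subr_eq0 (inj_eq hz) eq_sym.
have L0 r t : t != r -> (L r).[z t] = 0.
  move=> tr; rewrite /L horner_prod (bigD1 t) //=.
  by rewrite hornerXsubC subrr mul0r.
have sL r : size (L r) = m.
  rewrite size_prod; last by move=> j _; rewrite polyXsubC_eq0.
  rewrite (eq_bigr (fun=> 2%N)); last by move=> j _; rewrite size_XsubC.
  rewrite sum_nat_const cardC1 card_ord.
  case: (m) m0 => // m' _; rewrite /=. lia.
have mL r : L r \is monic by rewrite /L monic_prod // => j _; apply: monicXsubC.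
pose Q := \sum_(r < m) (p.[z r] / D r) *: L r - p.
have Qz t : Q.[z t] = 0.
  rewrite /Q hornerD hornerN horner_sum (bigD1 t) //= big1.
    by rewrite hornerZ DL addr0 mulfVK ?D0 // subrr.
  by move=> r rt; rewrite hornerZ L0 ?mulr0 // eq_sym.
have Q0 : Q = 0.
  apply/eqP; apply: contraT => Qn.
  have := max_poly_roots Qn (rs := map z (enum 'I_m)).
  rewrite size_map size_enum_ord.
  have -> : all (root Q) [seq z i | i <- enum 'I_m].
    by apply/allP => x /mapP [u _ ->]; apply/rootP/Qz.
  rewrite map_inj_uniq ?enum_uniq // => /(_ isT isT) H.
  suff : (size Q <= m)%N by rewrite leqNgt H. rewrite /Q.
  apply: (leq_trans (size_polyD _ _)); rewrite geq_max size_polyN (ltnW sp) andbT.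
  apply: (leq_trans (size_sum _ _ _)).
  apply/bigmax_leqP => r _; apply: (leq_trans (size_scale_leq _ _)).
  by rewrite sL.
have := congr1 (fun q : {poly K} => q`_(m.-1)) Q0.
rewrite coef0 /Q coefB coef_sum [p`_ _]nth_default; last first.
  by rewrite -ltnS prednK.
rewrite subr0 => H; rewrite -[X in _ = X]H; apply: eq_bigr => r _.
rewrite coefZ.
have := mL r; rewrite monicE /lead_coef sL => /eqP ->.
by rewrite mulr1.
Qed.

Lemma exch_gen (K : comRingType) m (c : 'I_m -> K) (Q : 'I_m -> 'I_m -> K) :
  \sum_s c s * \sum_r c r * Q r s = \sum_r c r * \sum_s c s * Q r s.
Proof.
under eq_bigr do rewrite big_distrr.
rewrite exchange_big; apply: eq_bigr => r _; rewrite big_distrr.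
by apply: eq_bigr => s _ /=; rewrite mulrCA.
Qed.

Lemma alg2 (K : comRingType) m (c X Y : 'I_m -> K) :
  - - (\sum_s c s * (- X s - Y s)) + \sum_s c s * Y s = - \sum_s c s * X s.
Proof.
rewrite opprK -big_split -sumrN; apply: eq_bigr => s _ /=; ring.
Qed.

Theorem mainTheorem5 (R : realType) (n : nat) (hn : (4 <= n)%N)
  (z : 'I_(n - 1) -> R[i]) (hz : injective z) (j : 'I_(n - 1) -> R[i])
  (U : set (CV R (n - 1))) (hU : open U)
  (F : CV R (n - 1) -> (R[i])^o)
  (hF1 : forall x : CV R (n - 1), U x -> differentiable F x)
  (hF2 : forall (r : 'I_(n - 1)) (x : CV R (n - 1)), U x -> differentiable (pd F r) x)
  (k : 'I_(n - 3)) (y : 'rV[R[i]]_(n - 3)) (rho : R[i])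
  (hrho : rho != 0) (hyk : forall r : 'I_(n - 1), y 0 k != z r)
  (hU0 : U (kvec z y rho)) :
  Ttilde z (fun r => j r * (j r + 1)) (y 0 k) F (kvec z y rho)
  = - pd (pd (fun y' : 'rV[R[i]]_(n - 3) => F (kvec z y' rho)) k) k y.
Proof.
set w := y 0 k.
set x0 := kvec z y rho.
pose P r := \prod_(l < n - 3 | l != k) (z r - y 0 l).
pose D r := \prod_(s < n - 1 | s != r) (z r - z s).
pose c r := x0 0 r / (w - z r).
have wz r : w - z r != 0 by rewrite subr_eq0 hyk.
have D0 r : D r != 0.
  by apply/prodf_neq0 => s sr; rewrite subr_eq0 (inj_eq hz) eq_sym.
have x0E r : x0 0 r = rho * ((z r - w) * P r / D r).
  by rewrite /x0 /kvec mxE /kappa (bigD1 k).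
have hc r : c r = - (rho * P r / D r).
  rewrite /c x0E; field; by rewrite wz D0.
have sumc : \sum_r c r = 0.
  pose p := \prod_(l < n - 3 | l != k) ('X - (y 0 l)%:P).
  have Pp r : P r = p.[z r].
    by rewrite /p horner_prod; apply: eq_bigr => l _; rewrite hornerXsubC.
  have sp : (size p < n - 1)%N.
    rewrite /p size_prod; last by move=> l _; rewrite polyXsubC_eq0.
    rewrite (eq_bigr (fun=> 2%N)); last by move=> l _; rewrite size_XsubC.
    rewrite sum_nat_const cardC1 card_ord; lia.
  have := @lagr _ _ _ hz _ sp.
  have -> : \sum_r c r = - (rho * \sum_(r < n - 1) p.[z r] / \prod_(s < n - 1 | s != r) (z r - z s)).
    rewrite big_distrr -sumrN; apply: eq_bigr => r _; by rewrite hc Pp -mulrA.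
  by move=> ->; rewrite mulr0 oppr0.
pose ek : 'rV[R[i]]_(n - 3) := delta_mx 0 k.
pose v : 'rV[R[i]]_(n - 1) := \row_r c r.
have hline h : kvec z (h *: ek + y) rho = h *: v + x0.
  apply/rowP => r; rewrite /kvec /kappa !mxE (bigD1 k) //=.
  have -> : \prod_(l < n - 3 | l != k) (z r - (h *: ek + y) 0 l) = P r.
    by apply: eq_bigr => l lk; rewrite !mxE eqxx (negbTE lk) mulr0 add0r.
  have kx : rho * kappa z y r = x0 0 r by rewrite /x0 /kvec mxE.
  rewrite !mxE !eqxx mulr1 hc kx x0E -/w -/(D r); field; exact: D0.
have Ux0 : nbhs (x0 : CV R (n - 1)) U by apply: open_nbhs_nbhs; split.
have hnear : \forall h \near (0 : (R[i] : numFieldType)), U (h *: v + x0).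
  have H1 := @scalel_continuous R[i] (CV R (n - 1)) v 0.
  have := cvgD H1 (cvg_cst (x0 : CV R (n - 1))).
  rewrite scale0r add0r => H.
  eapply H; [typeclasses eauto | typeclasses eauto | exact Ux0].
set G0 := (fun y' : 'rV_(n - 3) => F (kvec z y' rho)).
pose psi := fun x : 'rV[R[i]]_(n - 1) => derive F x v.
have hB h : pd G0 k (h *: ek + y) = psi (h *: v + x0).
  rewrite /pd /psi /derive. f_equal. f_equal. apply/funext => h' /=. by rewrite -/ek /G0 !addrA -!scalerDl !hline.
have hpd0 : pd G0 k y = psi x0 by have := hB 0; rewrite !scale0r !add0r.
have RHS1 : pd (pd G0 k) k y = derive psi x0 v.
  exact: (@derive_transfer _ _ _ _ (pd G0 k) psi y x0 ek v hB).
pose phi := fun x : 'rV[R[i]]_(n - 1) => \sum_r c r * pd F r x.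
have phiE x : U x -> psi x = phi x.
  move=> Ux; rewrite /psi /phi (@derive_rowlin _ _ F x v (hF1 x Ux)).
  by apply: eq_bigr => r _; rewrite mxE.
have dpF r : derivable (pd F r) x0 v.
  exact: (@diff_derivable _ _ _ (pd F r) x0 v (hF2 r x0 hU0)).
have [dphi ephi] := @derive_sumZ _ _ _ c (fun r => pd F r) x0 v dpF.
have RHS2 : derive psi x0 v = \sum_r c r * \sum_s c s * pd (pd F r) s x0.
  rewrite (@derive_near _ _ _ psi phi x0 v dphi); last first.
    by apply: filterS hnear => h Uh; exact: phiE.
  rewrite /phi ephi; apply: eq_bigr => r _.
  rewrite (@derive_rowlin _ _ (pd F r) x0 v (hF2 r x0 hU0)).
  by congr (_ * _); apply: eq_bigr => s _; rewrite mxE.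
have opc : op_c z w (op_b z (fun r => j r * (j r + 1)) w F) x0 = 0.
  rewrite /op_c -big_distrl /=.
  have -> : \sum_r x0 0 r / (w - z r) = 0 := sumc.
  by rewrite mul0r.
have hcoord r (e : 'rV[R[i]]_(n - 1)) :
    derivable (fun x : 'rV[R[i]]_(n - 1) => (x 0 r / (w - z r) : R[i]^o)) x0 e /\
    derive (fun x : 'rV[R[i]]_(n - 1) => (x 0 r / (w - z r) : R[i]^o)) x0 e = e 0 r / (w - z r).
  apply: (@derive_affine _ _ _ (fun x : 'rV[R[i]]_(n - 1) => (x 0 r / (w - z r) : R[i]^o)) x0 e).
  by move=> h; rewrite !mxE; rewrite /GRing.scale /=; ring.
have opa s : pd (op_a z w F) s x0 = \sum_r (-1) * (c r * pd (pd F r) s x0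
    + pd F r x0 * ((delta_mx 0 s : 'rV[R[i]]_(n - 1)) 0 r / (w - z r))).
  pose f r := (fun x : 'rV[R[i]]_(n - 1) => (x 0 r / (w - z r) : R[i]^o)).
  have E : op_a z w F = (fun x => \sum_r (-1) * ((f r * pd F r) x)).
    apply/funext => x; rewrite /op_a -sumrN; apply: eq_bigr => r _; by rewrite mulN1r.
  have dfg r : derivable (f r * pd F r) x0 (delta_mx 0 s).
    apply: derivableM; first exact: (hcoord r _).1.
    exact: (@diff_derivable _ _ _ (pd F r) x0 _ (hF2 r x0 hU0)).
  have dpr r : derivable (pd F r) x0 (delta_mx 0 s).
    exact: (@diff_derivable _ _ _ (pd F r) x0 _ (hF2 r x0 hU0)).
  rewrite /pd E (@derive_sumZ _ _ _ (fun=> -1) (fun r => f r * pd F r) x0 (delta_mx 0 s) dfg).2.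
  apply: eq_bigr => r _; congr (_ * _).
  rewrite (deriveM (hcoord r _).1 (dpr r)) (hcoord r _).2.
  by [].
have inner s : \sum_r (-1) * (c r * pd (pd F r) s x0
    + pd F r x0 * ((delta_mx 0 s : 'rV[R[i]]_(n - 1)) 0 r / (w - z r)))
    = - (\sum_r c r * pd (pd F r) s x0) - pd F s x0 / (w - z s).
  under eq_bigr => r _ do rewrite mulN1r opprD.
  have dsum : \sum_r pd F r x0 * ((delta_mx 0 s : 'rV[R[i]]_(n - 1)) 0 r / (w - z r))
      = pd F s x0 / (w - z s).
    rewrite (bigD1 s); last by [].
    rewrite big1; last first.
      move=> r /andP[_ rs]; rewrite mxE (negbTE rs) andbF mul0r mulr0 //.
    rewrite Monoid.mulm1 mxE !eqxx mul1r //.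
  by rewrite big_split /= !sumrN dsum.
have exch := @exch_gen R[i] _ c (fun r s => (pd (pd F r) s x0 : R[i])).
rewrite RHS1 RHS2 /Ttilde opc subr0.
have E1 : op_a z w (op_a z w F) x0
    = - \sum_s c s * (- (\sum_r c r * pd (pd F r) s x0) - pd F s x0 / (w - z s)).
  transitivity (- \sum_s c s * pd (op_a z w F) s x0); first by [].
  by congr (- _); apply: eq_bigr => s _; rewrite opa inner.
have E2 : op_a' z w F x0 = \sum_s c s * (pd F s x0 / (w - z s)).
  by rewrite /op_a'; apply: eq_bigr => r _; rewrite /c expr2 invfM; ring.
rewrite E1 E2 -exch.
exact: alg2.
Qed.
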